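(* Let $\alpha\in(0,1)$ be irrational with continued fraction expansion $\alpha=[a_1,a_2,a_3,\dots]$ such that the sequence $(a_n)$ is bounded. Then for every $\lambda\in\mathbb{R}\setminus\{0\}$, every $\theta\in[0,1)$ and every $E\in\mathbb{C}$ the limit $$\gamma_\theta(E)=\lim_{n\to\infty}\frac{1}{n}\ln\|M(\lambda,E,v^n_{\alpha,\theta})\|$$ exists and is independent of $\theta$.
   Context: $\alpha=[a_1,a_2,\dots]$ means $\alpha=1/(a_1+1/(a_2+1/(a_3+\cdots)))$ with positive integers $a_n$. For $\theta\in[0,1)$ let $v_{\alpha,\theta}(n)=\chi_{[1-\alpha,1)}(n\alpha+\theta \bmod 1)$, $n\in\mathbb{Z}$, and let $v^n_{\alpha,\theta}$ denote the word $v_{\alpha,\theta}(1)\dots v_{\alpha,\theta}(n)$ over $\{0,1\}$. For $a\in\mathbb{R}$, $E\in\mathbb{C}$ let $T(\lambda,E,a)=\begin{pmatrix}E-\lambda a&-1\\1&0\end{pmatrix}$, and for a finite word $w=w_1\dots w_n$ over $\{0,1\}$ let $M(\lambda,E,w)=T(\lambda,E,w_n)\cdots T(\lambda,E,w_1)$. $\|\cdot\|$ is the operator norm on $2\times2$ complex matrices with respect to the Euclidean norm on $\mathbb{C}^2$. *)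

(* Defs.v *)
From Stdlib Require Import Reals.
From Coquelicot Require Import Coquelicot.
Open Scope R_scope.

(* finite continued fraction [a 0, ..., a (n-1)] = 1/(a0 + 1/(a1 + ... + 1/a(n-1))) ;
   a 0 plays the role of a_1 in the paper *)
Fixpoint cf_finite (a : nat -> nat) (n : nat) : R :=
  match n with
  | O => 0
  | S m => / (INR (a O) + cf_finite (fun k => a (S k)) m)
  end.

Definition is_cf_expansion (alpha : R) (a : nat -> nat) : Prop :=
  (forall k, (0 < a k)%nat) /\ is_lim_seq (cf_finite a) alpha.

Definition irrational (x : R) : Prop :=
  ~ exists p q : Z, q <> 0%Z /\ x = IZR p / IZR q.

Definition fracR (x : R) : R := x - IZR (Int_part x).

Definition v_seq (alpha theta : R) (n : nat) : R :=
  let y := fracR (INR n * alpha + theta) in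
  if Rle_dec (1 - alpha) y then (if Rlt_dec y 1 then 1 else 0) else 0.

Record mat2 := Mat2 { m11 : C; m12 : C; m21 : C; m22 : C }.

Definition mat2_mul (A B : mat2) : mat2 :=
  Mat2 (Cplus (Cmult (m11 A) (m11 B)) (Cmult (m12 A) (m21 B)))
       (Cplus (Cmult (m11 A) (m12 B)) (Cmult (m12 A) (m22 B)))
       (Cplus (Cmult (m21 A) (m11 B)) (Cmult (m22 A) (m21 B)))
       (Cplus (Cmult (m21 A) (m12 B)) (Cmult (m22 A) (m22 B))).

Definition mat2_id : mat2 := Mat2 (RtoC 1) (RtoC 0) (RtoC 0) (RtoC 1).

Definition mat2_apply (A : mat2) (v : C * C) : C * C :=
  (Cplus (Cmult (m11 A) (fst v)) (Cmult (m12 A) (snd v)),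
   Cplus (Cmult (m21 A) (fst v)) (Cmult (m22 A) (snd v))).

Definition vnorm (v : C * C) : R :=
  sqrt (Cmod (fst v) ^ 2 + Cmod (snd v) ^ 2).

Definition opnorm (A : mat2) : R :=
  real (Lub_Rbar (fun r => exists v, vnorm v = 1 /\ r = vnorm (mat2_apply A v))).

Definition Tmat (lambda : R) (E : C) (a : R) : mat2 :=
  Mat2 (Cminus E (RtoC (lambda * a))) (RtoC (-1)) (RtoC 1) (RtoC 0).

Fixpoint Mn (lambda : R) (E : C) (alpha theta : R) (n : nat) : mat2 :=
  match n with
  | O => mat2_id
  | S m => mat2_mul (Tmat lambda E (v_seq alpha theta (S m))) (Mn lambda E alpha theta m)
  end.

(* Main.v *)
Require Import Defs.
From Stdlib Require Import Reals Lra Lia Psatz ZArith.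
From Coquelicot Require Import Coquelicot.
Open Scope R_scope.


Lemma sqrt_ge_l (a b : R) : 0 <= a -> 0 <= b -> a <= sqrt (a ^ 2 + b ^ 2).
Proof. intros. rewrite <- (sqrt_pow2 a) at 1 by lra. apply sqrt_le_1_alt. nra. Qed.

Lemma sqrt_le_sum (a b : R) : 0 <= a -> 0 <= b -> sqrt (a ^ 2 + b ^ 2) <= a + b.
Proof. intros. rewrite <- (sqrt_pow2 (a+b)) by lra. apply sqrt_le_1_alt. nra. Qed.

Lemma Cmod_sq (z : C) : Cmod z ^ 2 = fst z ^ 2 + snd z ^ 2.
Proof. unfold Cmod. apply pow2_sqrt. nra. Qed.

Lemma vnorm_eq (v : C * C) : vnorm v =
  sqrt (fst (fst v) ^ 2 + snd (fst v) ^ 2 + (fst (snd v) ^ 2 + snd (snd v) ^ 2)).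
Proof. unfold vnorm. rewrite !Cmod_sq. f_equal. Qed.

Lemma vnorm_ge0 v : 0 <= vnorm v.
Proof. apply sqrt_pos. Qed.

Definition nb (A : mat2) : R := Cmod (m11 A) + Cmod (m12 A) + Cmod (m21 A) + Cmod (m22 A).

Lemma Cmod_le_vnorm1 v : Cmod (fst v) <= vnorm v.
Proof. unfold vnorm. apply sqrt_ge_l; apply Cmod_ge_0. Qed.
Lemma Cmod_le_vnorm2 v : Cmod (snd v) <= vnorm v.
Proof. unfold vnorm. rewrite Rplus_comm. apply sqrt_ge_l; apply Cmod_ge_0. Qed.

Lemma apply_bound A v : vnorm (mat2_apply A v) <= nb A * vnorm v.
Proof.
  unfold vnorm at 1. eapply Rle_trans. apply sqrt_le_sum; apply Cmod_ge_0.
  unfold mat2_apply; simpl.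
  pose proof (Cmod_le_vnorm1 v). pose proof (Cmod_le_vnorm2 v).
  pose proof (Cmod_triangle (m11 A * fst v) (m12 A * snd v)).
  pose proof (Cmod_triangle (m21 A * fst v) (m22 A * snd v)).
  rewrite !Cmod_mult in *. unfold nb.
  pose proof (Cmod_ge_0 (m11 A)). pose proof (Cmod_ge_0 (m12 A)).
  pose proof (Cmod_ge_0 (m21 A)). pose proof (Cmod_ge_0 (m22 A)).
  pose proof (Cmod_ge_0 (fst v)). pose proof (Cmod_ge_0 (snd v)).
  nra.
Qed.

Definition OSet (A : mat2) := fun r => exists v, vnorm v = 1 /\ r = vnorm (mat2_apply A v).

Definition e1 : C * C := (RtoC 1, RtoC 0).
Definition e2 : C * C := (RtoC 0, RtoC 1).
Lemma vnorm_e1 : vnorm e1 = 1.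
Proof. rewrite vnorm_eq. simpl. match goal with |- sqrt ?x = 1 => replace x with 1 by ring end. apply sqrt_1. Qed.
Lemma vnorm_e2 : vnorm e2 = 1.
Proof. rewrite vnorm_eq. simpl. match goal with |- sqrt ?x = 1 => replace x with 1 by ring end. apply sqrt_1. Qed.

Lemma opnorm_spec A :
  (forall v, vnorm v = 1 -> vnorm (mat2_apply A v) <= opnorm A) /\
  (forall b, (forall v, vnorm v = 1 -> vnorm (mat2_apply A v) <= b) -> opnorm A <= b).
Proof.
  unfold opnorm. fold (OSet A).
  destruct (Lub_Rbar_correct (OSet A)) as [Hub Hlub].
  destruct (Lub_Rbar (OSet A)) as [l| |] eqn:Hl.
  - simpl. split.
    + intros v Hv. apply (Hub _ (ex_intro _ v (conj Hv eq_refl))).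
    + intros b Hb. apply (Hlub (Finite b)). intros x [v [Hv ->]]. simpl. now apply Hb.
  - exfalso. assert (H := Hlub (Finite (nb A))).
    simpl in H. apply H. intros x [v [Hv ->]]. simpl.
    rewrite <- (Rmult_1_r (nb A)), <- Hv. apply apply_bound.
  - exfalso. apply (Hub _ (ex_intro _ e1 (conj vnorm_e1 eq_refl))).
Qed.

Lemma opnorm_ub A v : vnorm v = 1 -> vnorm (mat2_apply A v) <= opnorm A.
Proof. apply opnorm_spec. Qed.
Lemma opnorm_lub A b : (forall v, vnorm v = 1 -> vnorm (mat2_apply A v) <= b) -> opnorm A <= b.
Proof. apply opnorm_spec. Qed.
Lemma opnorm_ge0 A : 0 <= opnorm A.
Proof. eapply Rle_trans. apply vnorm_ge0. apply (opnorm_ub A e1 vnorm_e1). Qed.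
Lemma opnorm_le_nb A : opnorm A <= nb A.
Proof. apply opnorm_lub. intros v Hv. rewrite <- (Rmult_1_r (nb A)), <- Hv. apply apply_bound. Qed.

Definition scal (s : R) (v : C * C) : C * C :=
  ((s * fst (fst v), s * snd (fst v)), (s * fst (snd v), s * snd (snd v))).

Lemma vnorm_scal s v : 0 <= s -> vnorm (scal s v) = s * vnorm v.
Proof.
  intros Hs. rewrite !vnorm_eq. destruct v as [[a b] [c d]]. unfold scal. cbn [fst snd].
  replace ((s * a) ^ 2 + (s * b) ^ 2 + ((s * c) ^ 2 + (s * d) ^ 2))
    with ((s * s) * (a ^ 2 + b ^ 2 + (c ^ 2 + d ^ 2))) by ring.
  rewrite sqrt_mult_alt by nra. rewrite sqrt_square by lra. reflexivity.
Qed.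

Lemma apply_scal A s v : mat2_apply A (scal s v) = scal s (mat2_apply A v).
Proof.
  destruct A as [[p1 p2] [q1 q2] [r1 r2] [t1 t2]]. destruct v as [[a b] [c d]].
  unfold mat2_apply, scal, Cplus, Cmult; simpl. f_equal; f_equal; ring.
Qed.

Lemma opnorm_hom A v : vnorm (mat2_apply A v) <= opnorm A * vnorm v.
Proof.
  pose proof (vnorm_ge0 v) as H0.
  destruct (Req_dec (vnorm v) 0) as [Hz|Hz].
  - rewrite vnorm_eq in Hz. apply sqrt_eq_0 in Hz; [|nra].
    assert (Hv : v = scal 0 v).
    { destruct v as [[a b] [c d]]. simpl in Hz.
      assert (a = 0) by nra. assert (b = 0) by nra. assert (c = 0) by nra. assert (d = 0) by nra.
      subst. unfold scal; cbn [fst snd]. f_equal; f_equal; ring. }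
    rewrite Hv.
    rewrite apply_scal, !vnorm_scal by lra. pose proof (opnorm_ge0 A). nra.
  - assert (Hp : 0 < vnorm v) by lra.
    assert (Hu : vnorm (scal (/ vnorm v) v) = 1).
    { rewrite vnorm_scal. field. lra. left; apply Rinv_0_lt_compat; lra. }
    pose proof (opnorm_ub A _ Hu) as H1.
    rewrite apply_scal, vnorm_scal in H1 by (left; apply Rinv_0_lt_compat; lra).
    apply (Rmult_le_compat_l (vnorm v)) in H1; [|lra].
    rewrite <- Rmult_assoc, Rinv_r, Rmult_1_l in H1 by lra. lra.
Qed.

Lemma opnorm_submult A B Cm :
  (forall v, mat2_apply Cm v = mat2_apply A (mat2_apply B v)) ->
  opnorm Cm <= opnorm A * opnorm B.
Proof.
  intros H. apply opnorm_lub. intros v Hv. rewrite H.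
  eapply Rle_trans. apply opnorm_hom.
  apply Rmult_le_compat_l. apply opnorm_ge0. now apply opnorm_ub.
Qed.

Lemma apply_mul A B v : mat2_apply (mat2_mul A B) v = mat2_apply A (mat2_apply B v).
Proof.
  destruct A as [[p1 p2] [q1 q2] [r1 r2] [t1 t2]].
  destruct B as [[p1' p2'] [q1' q2'] [r1' r2'] [t1' t2']].
  destruct v as [[a b] [c d]].
  unfold mat2_apply, mat2_mul, Cplus, Cmult; simpl. f_equal; f_equal; ring.
Qed.

Definition detm (A : mat2) : C := Cminus (Cmult (m11 A) (m22 A)) (Cmult (m12 A) (m21 A)).

Lemma det_mul A B : detm (mat2_mul A B) = Cmult (detm A) (detm B).
Proof.
  destruct A as [[p1 p2] [q1 q2] [r1 r2] [t1 t2]].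
  destruct B as [[p1' p2'] [q1' q2'] [r1' r2'] [t1' t2']].
  unfold detm, mat2_mul, Cminus, Copp, Cplus, Cmult; simpl. f_equal; ring.
Qed.

Lemma apply_e1 A : mat2_apply A e1 = (m11 A, m21 A).
Proof.
  destruct A as [[p1 p2] [q1 q2] [r1 r2] [t1 t2]].
  unfold e1, mat2_apply, Cplus, Cmult, RtoC; cbn [fst snd m11 m21]. f_equal; f_equal; ring.
Qed.
Lemma apply_e2 A : mat2_apply A e2 = (m12 A, m22 A).
Proof.
  destruct A as [[p1 p2] [q1 q2] [r1 r2] [t1 t2]].
  unfold e2, mat2_apply, Cplus, Cmult, RtoC; cbn [fst snd m12 m22]. f_equal; f_equal; ring.
Qed.

Lemma opnorm_ge1 A : detm A = RtoC 1 -> 1 <= opnorm A.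
Proof.
  intros Hd.
  pose proof (opnorm_ub A e1 vnorm_e1) as H1.
  pose proof (opnorm_ub A e2 vnorm_e2) as H2.
  pose proof (opnorm_ge0 A).
  rewrite apply_e1 in H1. rewrite apply_e2 in H2.
  rewrite vnorm_eq in H1, H2.
  destruct A as [[p1 p2] [q1 q2] [r1 r2] [t1 t2]].
  unfold detm, Cminus, Copp, Cplus, Cmult, RtoC in Hd; cbn [fst snd m11 m12 m21 m22] in Hd, H1, H2.
  injection Hd as Hd1 Hd2.
  set (X := p1 ^ 2 + p2 ^ 2 + (r1 ^ 2 + r2 ^ 2)) in H1.
  set (Y := q1 ^ 2 + q2 ^ 2 + (t1 ^ 2 + t2 ^ 2)) in H2.
  assert (HXY : 1 <= X * Y).
  { unfold X, Y.
    assert (L : (p1 ^ 2 + p2 ^ 2 + (r1 ^ 2 + r2 ^ 2)) * (q1 ^ 2 + q2 ^ 2 + (t1 ^ 2 + t2 ^ 2)) =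
      ((p1 * t1 - p2 * t2 - (q1 * r1 - q2 * r2)))^2 + ((p1 * t2 + p2 * t1 - (q1 * r2 + q2 * r1)))^2
      + (p1*q1 + p2*q2 + r1*t1 + r2*t2)^2 + (p1*q2 - p2*q1 + r1*t2 - r2*t1)^2) by ring.
    rewrite L. replace (p1 * t1 - p2 * t2 - (q1 * r1 - q2 * r2)) with 1 by (rewrite <- Hd1; ring).
    replace (p1 * t2 + p2 * t1 - (q1 * r2 + q2 * r1)) with 0 by (rewrite <- Hd2; ring).
    match goal with |- 1 <= _ + _ + ?a ^ 2 + ?b ^ 2 => pose proof (pow2_ge_0 a); pose proof (pow2_ge_0 b) end.
    replace (1 ^ 2) with 1 by ring. replace (0 ^ 2) with 0 by ring. lra. }
  assert (0 <= X) by (unfold X; nra). assert (0 <= Y) by (unfold Y; nra).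
  assert (Hs : 1 <= sqrt X * sqrt Y).
  { rewrite <- sqrt_mult by lra. rewrite <- sqrt_1. now apply sqrt_le_1_alt. }
  pose proof (sqrt_pos X). pose proof (sqrt_pos Y). nra.
Qed.


Lemma v_seq_shift alpha theta n j :
  v_seq alpha theta (n + j) = v_seq alpha (theta + INR n * alpha) j.
Proof.
  unfold v_seq. replace (INR (n + j) * alpha + theta) with (INR j * alpha + (theta + INR n * alpha)).
  reflexivity. rewrite plus_INR. ring.
Qed.

Lemma v_seq_01 alpha theta j : 0 <= v_seq alpha theta j <= 1.
Proof.
  unfold v_seq. destruct Rle_dec; [destruct Rlt_dec|]; lra.
Qed.

Lemma apply_id v : mat2_apply mat2_id v = v.
Proof.
  destruct v as [[a b] [c d]]. unfold mat2_apply, mat2_id, Cplus, Cmult, RtoC; cbn [fst snd m11 m12 m21 m22].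
  f_equal; f_equal; ring.
Qed.

Lemma Mn_apply_add lambda E alpha theta n m v :
  mat2_apply (Mn lambda E alpha theta (n + m)) v =
  mat2_apply (Mn lambda E alpha (theta + INR n * alpha) m) (mat2_apply (Mn lambda E alpha theta n) v).
Proof.
  induction m as [|m IH].
  - rewrite Nat.add_0_r. simpl Mn at 2. now rewrite apply_id.
  - rewrite Nat.add_succ_r. simpl Mn. rewrite !apply_mul, IH.
    rewrite <- (v_seq_shift alpha theta n (S m)), Nat.add_succ_r. reflexivity.
Qed.

Lemma det_Mn lambda E alpha theta n : detm (Mn lambda E alpha theta n) = RtoC 1.
Proof.
  induction n as [|n IH]; simpl Mn.
  - unfold detm, mat2_id, Cminus, Copp, Cplus, Cmult, RtoC; cbn [fst snd m11 m12 m21 m22]. f_equal; ring.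
  - rewrite det_mul, IH. unfold detm, Tmat, Cminus, Copp, Cplus, Cmult, RtoC; cbn [fst snd m11 m12 m21 m22].
    f_equal; ring.
Qed.

Lemma opnorm_Mn_ge1 lambda E alpha theta n : 1 <= opnorm (Mn lambda E alpha theta n).
Proof. apply opnorm_ge1, det_Mn. Qed.

Definition cT (lambda : R) (E : C) : R := Cmod E + Rabs lambda + 2.

Lemma opnorm_T lambda E x : 0 <= x <= 1 -> opnorm (Tmat lambda E x) <= cT lambda E.
Proof.
  intros Hx. eapply Rle_trans. apply opnorm_le_nb. unfold nb, Tmat, cT; cbn [m11 m12 m21 m22].
  unfold Cminus. pose proof (Cmod_triangle E (- RtoC (lambda * x))). rewrite Cmod_opp, Cmod_R in H.
  rewrite !Cmod_R, Rabs_R1, Rabs_R0.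
  assert (Hm : Rabs (-1) = 1) by (rewrite Rabs_left; lra). rewrite Hm.
  rewrite Rabs_mult in H. pose proof (Rabs_pos lambda).
  assert (Rabs x <= 1) by (rewrite Rabs_pos_eq; lra).
  assert (Rabs lambda * Rabs x <= Rabs lambda) by nra.
  revert H. generalize (Cmod (E + - (lambda * x)%R)). intros. lra.
Qed.

Lemma cT_ge1 lambda E : 1 <= cT lambda E.
Proof. unfold cT. pose proof (Cmod_ge_0 E). pose proof (Rabs_pos lambda). lra. Qed.

Lemma opnorm_Mn_le lambda E alpha theta n : opnorm (Mn lambda E alpha theta n) <= cT lambda E ^ n.
Proof.
  induction n as [|n IH]; simpl Mn.
  - simpl. apply opnorm_lub. intros v Hv. rewrite apply_id. lra.
  - eapply Rle_trans. apply opnorm_submult. intros v; apply apply_mul.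
    simpl. apply Rmult_le_compat. apply opnorm_ge0. apply opnorm_ge0.
    apply opnorm_T, v_seq_01. exact IH.
Qed.

Definition fL lambda E alpha theta n := ln (opnorm (Mn lambda E alpha theta n)).

Lemma fL_bounds lambda E alpha theta n :
  0 <= fL lambda E alpha theta n <= INR n * ln (cT lambda E).
Proof.
  unfold fL. pose proof (opnorm_Mn_ge1 lambda E alpha theta n). split.
  - rewrite <- ln_1. apply ln_le; lra.
  - rewrite <- ln_pow by (pose proof (cT_ge1 lambda E); lra). apply ln_le. lra. apply opnorm_Mn_le.
Qed.

Lemma fL_subadd lambda E alpha theta n m :
  fL lambda E alpha theta (n + m) <= fL lambda E alpha theta n + fL lambda E alpha (theta + INR n * alpha) m.
Proof.
  unfold fL. rewrite Rplus_comm, <- ln_mult.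
  apply ln_le. pose proof (opnorm_Mn_ge1 lambda E alpha theta (n + m)); lra.
  apply opnorm_submult. intros v. apply Mn_apply_add.
  pose proof (opnorm_Mn_ge1 lambda E alpha (theta + INR n * alpha) m); lra.
  pose proof (opnorm_Mn_ge1 lambda E alpha theta n); lra.
Qed.

Lemma Mn_ext lambda E alpha t1 t2 n :
  (forall j, (1 <= j <= n)%nat -> v_seq alpha t1 j = v_seq alpha t2 j) ->
  Mn lambda E alpha t1 n = Mn lambda E alpha t2 n.
Proof.
  induction n as [|n IH]; intros H; simpl; [reflexivity|].
  rewrite H by lia. rewrite IH by (intros; apply H; lia). reflexivity.
Qed.


Lemma sup_family (f : R -> nat -> R) (c0 : R)
  (Hb : forall th n, 0 <= f th n <= INR n * c0) :
  exists Sp : nat -> R, (forall th n, f th n <= Sp n) /\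
    (forall n eta, 0 < eta -> exists th, Sp n - eta < f th n).
Proof.
  assert (Hbd : forall n, bound (fun r => exists th, r = f th n)).
  { intros n. exists (INR n * c0). intros r [th ->]. apply Hb. }
  assert (Hne : forall n, exists r, (fun r => exists th, r = f th n) r).
  { intros n. exists (f 0 n). exists 0. reflexivity. }
  exists (fun n => proj1_sig (completeness _ (Hbd n) (Hne n))).
  split.
  - intros th n. destruct (completeness _ (Hbd n) (Hne n)) as [s [Hs1 Hs2]]. simpl.
    apply Hs1. exists th. reflexivity.
  - intros n eta Heta. destruct (completeness _ (Hbd n) (Hne n)) as [s [Hs1 Hs2]]. simpl.
    apply Classical_Prop.NNPP. intros Hno.
    assert (s <= s - eta). { apply Hs2. intros r [th ->].
      destruct (Rlt_le_dec (s - eta) (f th n)) as [h|h]; [exfalso; apply Hno; now exists th | exact h]. }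
    lra.
Qed.

Lemma inf_ratio (Sp : nat -> R) (HS : forall n, 0 <= Sp n) :
  exists g, 0 <= g /\ (forall n, (1 <= n)%nat -> g * INR n <= Sp n) /\
    (forall eps, 0 < eps -> exists l, (1 <= l)%nat /\ Sp l < (g + eps) * INR l).
Proof.
  set (G := fun x => exists n, (1 <= n)%nat /\ x = - (Sp n / INR n)).
  assert (Hub0 : is_upper_bound G 0).
  { intros x [n [Hn ->]]. assert (0 < INR n) by (apply lt_0_INR; lia).
    pose proof (HS n). assert (0 <= Sp n / INR n) by (apply Rdiv_le_0_compat; lra). lra. }
  assert (Hbd : bound G) by (exists 0; exact Hub0).
  assert (Hne : exists x, G x). { exists (- (Sp 1%nat / INR 1)). exists 1%nat. split; auto. }
  destruct (completeness G Hbd Hne) as [m [Hm1 Hm2]].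
  exists (- m). split; [|split].
  - pose proof (Hm2 0 Hub0). lra.
  - intros n Hn. assert (0 < INR n) by (apply lt_0_INR; lia).
    assert (G (- (Sp n / INR n))) by (exists n; split; auto).
    apply Hm1 in H0. apply (Rmult_le_reg_r (/ INR n)). apply Rinv_0_lt_compat; lra.
    rewrite Rmult_assoc, Rinv_r by lra. unfold Rdiv in H0. lra.
  - intros eps Heps. apply Classical_Prop.NNPP. intros Hno.
    assert (m <= m - eps). { apply Hm2. intros x [n [Hn ->]].
      assert (0 < INR n) by (apply lt_0_INR; lia).
      destruct (Rlt_le_dec (Sp n) ((- m + eps) * INR n)) as [h|h].
      - exfalso. apply Hno. exists n. split; auto.
      - apply (Rmult_le_compat_r (/ INR n)) in h; [|left; apply Rinv_0_lt_compat; lra].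
        rewrite Rmult_assoc, Rinv_r in h by lra. unfold Rdiv. lra. }
    lra.
Qed.

Lemma upper_block (f : R -> nat -> R) (alpha c0 : R) (Sp : nat -> R)
  (Hb : forall th n, 0 <= f th n <= INR n * c0)
  (Hs : forall th (n m : nat), f th (n + m)%nat <= f th n + f (th + INR n * alpha) m)
  (HS : forall th n, f th n <= Sp n) (l : nat) (Hl : (1 <= l)%nat) :
  forall th n, f th n <= INR n * (Sp l / INR l) + INR l * c0.
Proof.
  assert (Hq : forall q th, f th (q * l)%nat <= INR q * Sp l).
  { induction q as [|q IH]; intros th.
    - simpl. pose proof (Hb th 0%nat). simpl in H. lra.
    - replace (S q * l)%nat with (l + q * l)%nat by lia.
      eapply Rle_trans. apply Hs. rewrite S_INR.
      pose proof (HS th l). pose proof (IH (th + INR l * alpha)). lra. }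
  intros th n.
  assert (Hl0 : l <> 0%nat) by lia.
  pose proof (Nat.div_mod_eq n l) as Hd. pose proof (Nat.mod_upper_bound n l Hl0) as Hr.
  set (q := (n / l)%nat) in *. set (r := (n mod l)%nat) in *.
  assert (c0 >= 0). { pose proof (Hb 0 1%nat). simpl in H. lra. }
  assert (0 <= Sp l). { pose proof (Hb 0 l). pose proof (HS 0 l). lra. }
  assert (0 < INR l) by (apply lt_0_INR; lia).
  rewrite Hd. replace (l * q + r)%nat with (q * l + r)%nat by lia.
  eapply Rle_trans. apply Hs.
  pose proof (Hq q th). pose proof (Hb (th + INR (q * l) * alpha) r).
  assert (INR r <= INR l) by (apply le_INR; lia).
  rewrite ?plus_INR, ?mult_INR in *.
  assert (INR q * Sp l = INR l * INR q * (Sp l / INR l)) by (field; lra).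
  assert (0 <= Sp l / INR l) by (apply Rdiv_le_0_compat; lra).
  pose proof (pos_INR r). pose proof (pos_INR q). nra.
Qed.

Lemma IZR_le_INR_to_nat (z : Z) : IZR z <= INR (Z.to_nat z).
Proof.
  destruct (Z_le_gt_dec 0 z) as [h|h].
  - rewrite INR_IZR_INZ, Z2Nat.id by lia. lra.
  - pose proof (pos_INR (Z.to_nat z)). apply Z.gt_lt in h. apply IZR_lt in h. lra.
Qed.

Lemma uniform_subadd (f : R -> nat -> R) (alpha c0 : R) (L : nat)
  (Hb : forall th n, 0 <= f th n <= INR n * c0)
  (Hs : forall th (n m : nat), f th (n + m)%nat <= f th n + f (th + INR n * alpha) m)
  (Hlr : forall th th' n, (1 <= n)%nat ->
     exists k, (k <= L * n)%nat /\ f (th' + INR k * alpha) n = f th n) :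
  exists g : R, forall th, is_lim_seq (fun n => f th n / INR n) g.
Proof.
  destruct (sup_family f c0 Hb) as [Sp [HS1 HS2]].
  assert (HS0 : forall n, 0 <= Sp n) by (intros n; pose proof (Hb 0 n); pose proof (HS1 0 n); lra).
  destruct (inf_ratio Sp HS0) as [g [Hg0 [Hg1 Hg2]]].
  assert (Hc0 : 0 <= c0) by (pose proof (Hb 0 1%nat); simpl in H; lra).
  exists g. intros th. apply is_lim_seq_spec. intros [eps Heps]. simpl.
  destruct (Hg2 (eps / 2)) as [l [Hl Hl2]]; [lra|].
  pose proof (upper_block f alpha c0 Sp Hb Hs HS1 l Hl) as HU.
  set (e' := eps / (2 * (INR L + 1))).
  assert (HL0 : 0 <= INR L) by apply pos_INR.
  assert (He' : 0 < e') by (unfold e'; apply Rdiv_lt_0_compat; lra).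
  destruct (Hg2 e' He') as [l' [Hl' Hl'2]].
  pose proof (upper_block f alpha c0 Sp Hb Hs HS1 l' Hl') as HU'.
  set (D := INR l' * c0).
  assert (HD : 0 <= D) by (unfold D; pose proof (pos_INR l'); nra).
  assert (Hl0 : 0 < INR l) by (apply lt_0_INR; lia).
  assert (Hl'0 : 0 < INR l') by (apply lt_0_INR; lia).
  assert (HU'2 : forall th0 k, f th0 k <= INR k * (g + e') + D).
  { intros th0 k. eapply Rle_trans. apply HU'. unfold D.
    assert (Sp l' / INR l' <= g + e').
    { apply (Rmult_le_reg_r (INR l')); [lra|]. unfold Rdiv. rewrite Rmult_assoc, Rinv_l by lra. lra. }
    pose proof (pos_INR k). nra. }
  destruct (archimed (2 * (INR l * c0) / eps + 2 * (1 + 2 * D) / eps)) as [Hup _].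
  exists (Z.to_nat (up (2 * (INR l * c0) / eps + 2 * (1 + 2 * D) / eps)) + 1)%nat.
  intros n Hn.
  assert (Hn1 : (1 <= n)%nat) by lia.
  assert (Hnpos : 0 < INR n) by (apply lt_0_INR; lia).
  assert (Hnbig : 2 * (INR l * c0) / eps + 2 * (1 + 2 * D) / eps < INR n).
  { eapply Rlt_le_trans. apply Hup. 
    assert (IZR (up (2 * (INR l * c0) / eps + 2 * (1 + 2 * D) / eps)) <=
            INR (Z.to_nat (up (2 * (INR l * c0) / eps + 2 * (1 + 2 * D) / eps)))).
    { apply IZR_le_INR_to_nat. }
    eapply Rle_trans. apply H. apply le_INR. lia. }
  assert (Hq1 : 2 * (INR l * c0) / eps <= INR n * 1).
  { assert (0 <= 2 * (1 + 2 * D) / eps) by (apply Rdiv_le_0_compat; lra). lra. }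
  assert (Hq2 : 2 * (1 + 2 * D) / eps <= INR n * 1).
  { assert (0 <= 2 * (INR l * c0) / eps).
    { apply Rdiv_le_0_compat; [|lra]. pose proof (pos_INR l). nra. } lra. }
  assert (Hq1' : 2 * (INR l * c0) <= INR n * eps).
  { apply (Rmult_le_compat_r eps) in Hq1; [|lra]. unfold Rdiv in Hq1.
    rewrite Rmult_assoc, Rinv_l in Hq1 by lra. lra. }
  assert (Hq2' : 2 * (1 + 2 * D) <= INR n * eps).
  { apply (Rmult_le_compat_r eps) in Hq2; [|lra]. unfold Rdiv in Hq2.
    rewrite Rmult_assoc, Rinv_l in Hq2 by lra. lra. }
  assert (Hup1 : f th n < (g + eps) * INR n).
  { eapply Rle_lt_trans. apply HU.
    assert (Sp l / INR l < g + eps / 2).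
    { apply (Rmult_lt_reg_r (INR l)); [lra|]. unfold Rdiv. rewrite Rmult_assoc, Rinv_l by lra. lra. }
    nra. }
  assert (Hlow : (g - eps) * INR n < f th n).
  { set (m := ((L + 1) * n)%nat).
    assert (Hm1 : (1 <= m)%nat) by (unfold m; lia).
    destruct (HS2 m 1 Rlt_0_1) as [ths Hths].
    pose proof (Hg1 m Hm1) as Hgm.
    destruct (Hlr th ths n Hn1) as [k [Hk Hkf]].
    set (r := (m - k - n)%nat).
    assert (Hmdec : m = (k + (n + r))%nat) by (unfold r, m; nia).
    pose proof (Hs ths k (n + r)%nat) as Hs1.
    pose proof (Hs (ths + INR k * alpha) n%nat r) as Hs2.
    rewrite Hkf in Hs2. rewrite <- Hmdec in Hs1.
    pose proof (HU'2 ths k). pose proof (HU'2 (ths + INR k * alpha + INR n * alpha) r).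
    assert (Hkr : INR k + INR r = INR L * INR n).
    { rewrite <- plus_INR, <- mult_INR. f_equal. unfold r, m. nia. }
    assert (HmR : INR m = (INR L + 1) * INR n).
    { unfold m. rewrite mult_INR, plus_INR. simpl. ring. }
    assert (Hf : g * INR n - INR L * INR n * e' - 1 - 2 * D <= f th n).
    { rewrite HmR in Hgm. nra. }
    assert (INR L * INR n * e' <= INR n * (eps / 2)).
    { assert (H1 : INR L / (INR L + 1) <= 1).
      { apply Rmult_le_reg_r with (INR L + 1); [lra|]. unfold Rdiv; rewrite Rmult_assoc, Rinv_l; lra. }
      assert (H2 : INR L * e' = (eps / 2) * (INR L / (INR L + 1))) by (unfold e'; field; lra).
      assert (H3 : INR L * e' <= eps / 2).
      { rewrite H2. assert (0 < eps / 2) by lra. nra. }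
      nra. }
    nra. }
  assert (Hlt : Rabs (f th n - g * INR n) < eps * INR n) by (apply Rabs_def1; nra).
  replace (f th n / INR n - g) with ((f th n - g * INR n) * / INR n) by (field; lra).
  rewrite Rabs_mult, (Rabs_pos_eq (/ INR n)) by (left; apply Rinv_0_lt_compat; lra).
  apply (Rmult_lt_reg_r (INR n)); [lra|]. rewrite Rmult_assoc, Rinv_l by lra. lra.
Qed.


Lemma cf_finite_ext (a b : nat -> nat) n :
  (forall i, a i = b i) -> cf_finite a n = cf_finite b n.
Proof.
  revert a b. induction n as [|n IH]; intros a b H; simpl; [reflexivity|].
  rewrite H. f_equal. f_equal. apply IH. intros; apply H.
Qed.

Lemma cf_finite_range (a : nat -> nat) n :
  (forall k, (0 < a k)%nat) -> 0 <= cf_finite a n <= 1.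
Proof.
  revert a. induction n as [|n IH]; intros a Ha; simpl; [lra|].
  pose proof (IH (fun k => a (S k)) (fun k => Ha (S k))).
  assert (1 <= INR (a 0%nat)) by (apply (le_INR 1); apply Ha).
  split.
  - left. apply Rinv_0_lt_compat. lra.
  - rewrite <- Rinv_1. apply Rinv_le_contravar; lra.
Qed.

Fixpoint alph (alpha : R) (a : nat -> nat) (k : nat) : R :=
  match k with
  | O => alpha
  | S k => / alph alpha a k - INR (a k)
  end.

Lemma gauss_step (a : nat -> nat) (x : R) :
  (forall k, (0 < a k)%nat) -> 0 < x -> is_lim_seq (cf_finite a) x ->
  is_lim_seq (cf_finite (fun i => a (S i))) (/ x - INR (a 0%nat)).
Proof.
  intros Ha Hx Hl.
  apply is_lim_seq_incr_1 in Hl.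
  apply is_lim_seq_inv in Hl; [| simpl; intros h; injection h; lra].
  simpl in Hl.
  eapply is_lim_seq_ext; [| apply (is_lim_seq_minus' _ _ _ _ Hl (is_lim_seq_const (INR (a 0%nat))))].
  intros n. simpl. rewrite Rinv_inv.  ring.
Qed.

Lemma irr_step (x y : R) (n : nat) :
  0 < x -> y = / x - INR n -> irrational x -> irrational y.
Proof.
  intros Hx Hy Hirr [p [q [Hq Hpq]]]. apply Hirr.
  assert (Hn : / x = IZR (Z.of_nat n) + IZR p / IZR q) by (rewrite <- INR_IZR_INZ; lra).
  assert (Hq' : IZR q <> 0) by (apply not_0_IZR; exact Hq).
  assert (Hne : (Z.of_nat n * q + p)%Z <> 0%Z).
  { intros h. assert (IZR (Z.of_nat n * q + p) = 0) by (rewrite h; reflexivity).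
    rewrite plus_IZR, mult_IZR in H.
    assert (/ x = 0).
    { assert (H2 : / x = (IZR (Z.of_nat n) * IZR q + IZR p) / IZR q) by (rewrite Hn; field; exact Hq').
      rewrite H2, H. unfold Rdiv. ring. }
    pose proof (Rinv_0_lt_compat x Hx). lra. }
  exists q, (Z.of_nat n * q + p)%Z. split; [exact Hne|].
  assert (Hx' : x = / (/ x)) by (rewrite Rinv_inv; reflexivity).
  assert (Hden : IZR (Z.of_nat n) * IZR q + IZR p <> 0).
  { intros h. apply Hne. apply eq_IZR. rewrite plus_IZR, mult_IZR. rewrite h. reflexivity. }
  rewrite Hx', Hn. rewrite plus_IZR, mult_IZR. field. split; assumption.
Qed.

Lemma alph_props (alpha : R) (a : nat -> nat) :
  0 < alpha < 1 -> irrational alpha -> is_cf_expansion alpha a ->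
  forall k, 0 < alph alpha a k < 1 /\ irrational (alph alpha a k) /\
     is_lim_seq (cf_finite (fun i => a (k + i)%nat)) (alph alpha a k).
Proof.
  intros Ha Hirr [Hpos Hlim] k. induction k as [|k [Hx [Hi Hl]]].
  - simpl. split; [exact Ha|split; [exact Hirr|]].
    eapply is_lim_seq_ext; [|exact Hlim]. intros n. reflexivity.
  - assert (Hl2 : is_lim_seq (cf_finite (fun i => a (S k + i)%nat)) (alph alpha a (S k))).
    { simpl. pose proof (gauss_step (fun i => a (k + i)%nat) _ (fun i => Hpos _) (proj1 Hx) Hl) as H.
      cbv beta in H. rewrite Nat.add_0_r in H. eapply is_lim_seq_ext; [|exact H].
      intros n. apply cf_finite_ext. intros i. f_equal. lia. }
    assert (Hi2 : irrational (alph alpha a (S k))).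
    { apply (irr_step (alph alpha a k) _ (a k)); auto. lra. }
    assert (Hr : 0 <= alph alpha a (S k) <= 1).
    { split.
      - assert (Rbar_le 0 (alph alpha a (S k))).
        { eapply is_lim_seq_le; [| apply is_lim_seq_const | exact Hl2].
          intros n. apply cf_finite_range. intros; apply Hpos. }
        exact H.
      - assert (Rbar_le (alph alpha a (S k)) 1).
        { eapply is_lim_seq_le; [| exact Hl2 | apply is_lim_seq_const].
          intros n. apply cf_finite_range. intros; apply Hpos. }
        exact H. }
    split; [|split; [exact Hi2|exact Hl2]].
    split.
    + destruct (proj1 Hr) as [h|h]; [exact h|]. exfalso. apply Hi2.
      exists 0%Z, 1%Z. split; [lia|]. rewrite <- h. simpl. lra.
    + destruct (proj2 Hr) as [h|h]; [exact h|]. exfalso. apply Hi2.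
      exists 1%Z, 1%Z. split; [lia|]. rewrite h. simpl. lra.
Qed.


Fixpoint qq (a : nat -> nat) (k : nat) : Z * Z :=
  match k with
  | O => (0%Z, 1%Z)
  | S k => (snd (qq a k), (Z.of_nat (a k) * snd (qq a k) + fst (qq a k))%Z)
  end.
Fixpoint pp (a : nat -> nat) (k : nat) : Z * Z :=
  match k with
  | O => (1%Z, 0%Z)
  | S k => (snd (pp a k), (Z.of_nat (a k) * snd (pp a k) + fst (pp a k))%Z)
  end.

Lemma qp_det a k :
  (snd (pp a k) * fst (qq a k) - fst (pp a k) * snd (qq a k) = 1 \/
   snd (pp a k) * fst (qq a k) - fst (pp a k) * snd (qq a k) = -1)%Z.
Proof.
  induction k as [|k IH]; simpl; [right; reflexivity|].
  destruct IH as [h|h]; [right|left]; nia.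
Qed.

Lemma qq_props a K (Ha : forall k, (1 <= a k <= K)%nat) k :
  (0 <= fst (qq a k) <= snd (qq a k) /\ 1 <= snd (qq a k) /\ Z.of_nat k <= snd (qq a k) /\
   (k = 0%nat \/ 1 <= fst (qq a k)))%Z.
Proof.
  induction k as [|k IH]; simpl; [lia|].
  pose proof (Ha k). destruct IH as [h1 [h2 [h3 h4]]].
  destruct h4 as [->|h4]; simpl; nia.
Qed.

Lemma qq_K a K (Ha : forall k, (1 <= a k <= K)%nat) k :
  (snd (qq a (S k)) <= (Z.of_nat K + 1) * fst (qq a (S k)))%Z.
Proof.
  simpl. pose proof (Ha k). pose proof (qq_props a K Ha k). nia.
Qed.

Lemma qq_grow a K (Ha : forall k, (1 <= a k <= K)%nat) k :
  (snd (qq a k) + fst (qq a k) <= snd (qq a (S k)))%Z.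
Proof.
  simpl. pose proof (Ha k). pose proof (qq_props a K Ha k). nia.
Qed.

Lemma qp_id alpha a (Hx : forall k, 0 < alph alpha a k < 1) k :
  alpha * (IZR (snd (qq a k)) + alph alpha a k * IZR (fst (qq a k))) =
  IZR (snd (pp a k)) + alph alpha a k * IZR (fst (pp a k)).
Proof.
  induction k as [|k IH]; simpl.
  - ring.
  - rewrite !plus_IZR, !mult_IZR, <- INR_IZR_INZ.
    pose proof (Hx k) as Hk.
    set (x := alph alpha a k) in *.
    set (q1 := IZR (snd (qq a k))) in *. set (q0 := IZR (fst (qq a k))) in *.
    set (p1 := IZR (snd (pp a k))) in *. set (p0 := IZR (fst (pp a k))) in *.
    replace (alpha * (INR (a k) * q1 + q0 + (/ x - INR (a k)) * q1)) with (alpha * (q1 + x * q0) / x) by (field; lra).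
    rewrite IH. field. lra.
Qed.

Lemma qp_D alpha a K (Ha : forall k, (1 <= a k <= K)%nat) (Hx : forall k, 0 < alph alpha a k < 1) k :
  Rabs (IZR (snd (qq a k)) * alpha - IZR (snd (pp a k))) * IZR (snd (qq a (S k))) <= 1.
Proof.
  pose proof (qp_id alpha a Hx (S k)) as Hid.
  pose proof (qp_det a (S k)) as Hdet.
  pose proof (Hx (S k)) as Hxk.
  pose proof (qq_props a K Ha k) as Hq.
  change (fst (qq a (S k))) with (snd (qq a k)) in Hid, Hdet.
  change (fst (pp a (S k))) with (snd (pp a k)) in Hid, Hdet.
  set (x := alph alpha a (S k)) in *.
  assert (Hq1 : 0 <= IZR (snd (qq a k))) by (apply IZR_le; lia).
  set (Q' := snd (qq a (S k))) in *. set (P' := snd (pp a (S k))) in *.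
  set (q1 := snd (qq a k)) in *. set (p1 := snd (pp a k)) in *.
  assert (HE : (IZR q1 * alpha - IZR p1) * (IZR Q' + x * IZR q1) = IZR (q1 * P' - p1 * Q')).
  { rewrite minus_IZR, !mult_IZR.
    replace ((IZR q1 * alpha - IZR p1) * (IZR Q' + x * IZR q1)) with
      (IZR q1 * (alpha * (IZR Q' + x * IZR q1)) - IZR p1 * (IZR Q' + x * IZR q1)) by ring.
    rewrite Hid. ring. }
  assert (HA : Rabs (IZR q1 * alpha - IZR p1) * (IZR Q' + x * IZR q1) = 1).
  { assert (0 <= IZR Q' + x * IZR q1).
    { assert (0 <= IZR Q') by (apply IZR_le; unfold Q'; simpl; pose proof (Ha k); nia). nra. }
    rewrite <- (Rabs_pos_eq (IZR Q' + x * IZR q1)) by lra. rewrite <- Rabs_mult, HE.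
    destruct Hdet as [h|h].
    - replace (q1 * P' - p1 * Q')%Z with 1%Z by lia. apply Rabs_R1.
    - replace (q1 * P' - p1 * Q')%Z with (-1)%Z by lia. rewrite Rabs_Zabs. reflexivity. }
  pose proof (Rabs_pos (IZR q1 * alpha - IZR p1)).
  assert (0 <= Rabs (IZR q1 * alpha - IZR p1) * (x * IZR q1)).
  { apply Rmult_le_pos; [lra|]. apply Rmult_le_pos; lra. }
  nra.
Qed.

Lemma IZR_le_INR_to_nat' (z : Z) : IZR z <= INR (Z.to_nat z).
Proof.
  destruct (Z_le_gt_dec 0 z) as [h|h].
  - rewrite INR_IZR_INZ, Z2Nat.id by lia. lra.
  - pose proof (pos_INR (Z.to_nat z)). apply Z.gt_lt in h. apply IZR_lt in h. lra.
Qed.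

Lemma level_search a K (Ha : forall k, (1 <= a k <= K)%nat) (X : R) :
  exists k, X <= IZR (snd (qq a k)) /\
    (k = 0%nat \/ exists i, k = S i /\ IZR (snd (qq a i)) < X).
Proof.
  assert (Hm : forall m, X <= IZR (snd (qq a m)) -> exists k, X <= IZR (snd (qq a k)) /\
    (k = 0%nat \/ exists i, k = S i /\ IZR (snd (qq a i)) < X)).
  { induction m as [|m IH]; intros H.
    - exists 0%nat. split; auto.
    - destruct (Rle_lt_dec X (IZR (snd (qq a m)))) as [h|h].
      + apply IH, h.
      + exists (S m). split; auto. right. exists m. split; auto. }
  apply (Hm (Z.to_nat (up X))).
  destruct (archimed X) as [H1 _].
  pose proof (IZR_le_INR_to_nat' (up X)).
  pose proof (qq_props a K Ha (Z.to_nat (up X))) as [_ [_ [H3 _]]].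
  apply IZR_le in H3. rewrite <- INR_IZR_INZ in H3. lra.
Qed.

Lemma gap alpha a K (Ha : forall k, (1 <= a k <= K)%nat) (Hx : forall k, 0 < alph alpha a k < 1)
  (N : nat) (d z : Z) : (1 <= N)%nat -> (1 <= Z.abs d <= Z.of_nat N)%Z ->
  1 <= Rabs (IZR d * alpha - IZR z) * ((INR K + 1) * (INR K + 2) * INR N).
Proof.
  intros HN Hd.
  destruct (level_search a K Ha (INR N + 1)) as [k [Hk1 [Hk0|[i [-> Hi]]]]].
  { subst k. simpl in Hk1. pose proof (le_INR 1 N HN). simpl in H. lra. }
  pose proof (qp_det a (S i)) as Hdet. simpl fst in Hdet.
  pose proof (qp_D alpha a K Ha Hx (S i)) as HD.
  pose proof (qq_grow a K Ha (S i)) as Hgr. simpl fst in Hgr.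
  pose proof (qq_K a K Ha i) as HK. simpl fst in HK.
  pose proof (qq_props a K Ha i) as [Hq0 [Hq1 _]].
  set (Q := snd (qq a (S i))) in *. set (q0 := snd (qq a i)) in *.
  set (P := snd (pp a (S i))) in *. set (p0 := snd (pp a i)) in *.
  set (Q' := snd (qq a (S (S i)))) in *.
  assert (HQN : (Z.of_nat N + 1 <= Q)%Z).
  { apply le_IZR. rewrite plus_IZR, <- INR_IZR_INZ. simpl. lra. }
  assert (Hq0N : (q0 <= Z.of_nat N)%Z).
  { assert (IZR q0 < IZR (Z.of_nat N + 1)) by (rewrite plus_IZR, <- INR_IZR_INZ; simpl; lra).
    apply lt_IZR in H. lia. }
  assert (Hm : (d * P - z * Q <> 0)%Z).
  { intros h. set (e := (P * q0 - p0 * Q)%Z) in *.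
    assert (Hde : (d * e = Q * (z * q0 - d * p0))%Z).
    { unfold e. assert (d * P = z * Q)%Z by lia. nia. }
    destruct (Z.eq_dec (z * q0 - d * p0) 0) as [w0|w0].
    - rewrite w0 in Hde. destruct Hdet as [h1|h1]; fold e in h1; rewrite h1 in Hde; lia.
    - destruct Hdet as [h1|h1]; fold e in h1; rewrite h1 in Hde; nia. }
  set (D := IZR Q * alpha - IZR P) in *.
  assert (Hid : IZR Q * (IZR d * alpha - IZR z) = IZR (d * P - z * Q) + IZR d * D).
  { unfold D. rewrite minus_IZR, !mult_IZR. ring. }
  assert (Hm1 : 1 <= Rabs (IZR (d * P - z * Q))).
  { rewrite Rabs_Zabs. apply IZR_le. lia. }
  assert (HdN : Rabs (IZR d) <= INR N).
  { rewrite Rabs_Zabs, INR_IZR_INZ. apply IZR_le. lia. }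
  assert (HQpos : 0 < IZR Q) by (apply IZR_lt; lia).
  assert (HQ'Q : IZR Q + IZR q0 <= IZR Q') by (rewrite <- plus_IZR; apply IZR_le; lia).
  assert (HKQ : IZR Q <= (INR K + 1) * IZR q0).
  { rewrite INR_IZR_INZ. replace 1 with (IZR 1) by reflexivity. rewrite <- plus_IZR, <- mult_IZR. apply IZR_le. lia. }
  assert (HNQ : INR N + 1 <= IZR Q) by lra.
  assert (Hq0N' : IZR q0 <= INR N) by (rewrite INR_IZR_INZ; apply IZR_le; lia).
  assert (HK0 : 0 <= INR K) by apply pos_INR.
  pose proof (Rabs_pos D) as HD0.
  assert (H1 : 1 - INR N * Rabs D <= Rabs (IZR Q * (IZR d * alpha - IZR z))).
  { rewrite Hid. pose proof (Rabs_triang_inv (IZR (d * P - z * Q)) (- (IZR d * D))).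
    unfold Rminus in H. rewrite Ropp_involutive, Rabs_Ropp, Rabs_mult in H.
    assert (Rabs (IZR d) * Rabs D <= INR N * Rabs D) by (apply Rmult_le_compat_r; lra). lra. }
  assert (H2 : INR N * Rabs D * (INR K + 2) <= INR K + 1).
  { assert (INR N * (INR K + 2) <= (INR K + 1) * IZR Q') by nra. nra. }
  rewrite Rabs_mult, (Rabs_pos_eq (IZR Q)) in H1 by lra.
  set (A := Rabs (IZR d * alpha - IZR z)) in *.
  assert (0 <= A) by apply Rabs_pos.
  assert (H3 : 1 <= IZR Q * A * (INR K + 2)) by nra.
  assert (IZR Q <= (INR K + 1) * INR N) by nra.
  nra.
Qed.

Lemma dense alpha a K (Ha : forall k, (1 <= a k <= K)%nat) (Hx : forall k, 0 < alph alpha a k < 1)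
  (delta th u : R) : 0 < delta ->
  exists j : nat, INR j * delta <= 4 * (INR K + 1) /\
    exists z : Z, u <= th + INR j * alpha + IZR z < u + delta.
Proof.
  intros Hdl.
  assert (HK0 : 0 <= INR K) by apply pos_INR.
  destruct (level_search a K Ha (4 / delta)) as [k [Hk1 [Hk0|[i [-> Hi]]]]].
  - subst k. simpl in Hk1.
    assert (4 <= delta).
    { apply (Rmult_le_compat_r delta) in Hk1; [|lra]. unfold Rdiv in Hk1.
      rewrite Rmult_assoc, Rinv_l in Hk1 by lra. lra. }
    exists 0%nat. split; [simpl; lra|].
    exists (Int_part (u - th) + 1)%Z. destruct (base_Int_part (u - th)) as [b1 b2].
    rewrite plus_IZR. simpl. lra.
  - pose proof (qp_det a (S i)) as Hdet. simpl fst in Hdet.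
    pose proof (qp_D alpha a K Ha Hx (S i)) as HD.
    pose proof (qq_grow a K Ha (S i)) as Hgr. simpl fst in Hgr.
    pose proof (qq_K a K Ha i) as HK. simpl fst in HK.
    pose proof (qq_props a K Ha i) as [Hq0 [Hq1 _]].
    pose proof (qq_props a K Ha (S i)) as [_ [HQ1 _]].
    set (Q := snd (qq a (S i))) in *. set (q0 := snd (qq a i)) in *.
    set (P := snd (pp a (S i))) in *. set (p0 := snd (pp a i)) in *.
    set (Q' := snd (qq a (S (S i)))) in *.
    set (e := (P * q0 - p0 * Q)%Z) in *.
    set (t := u + delta / 2 - th).
    set (r := Int_part (IZR Q * t)).
    set (jz := ((e * r * q0) mod Q)%Z).
    set (s := ((e * r * q0) / Q)%Z).
    assert (Hjz : (0 <= jz < Q)%Z) by (apply Z.mod_pos_bound; lia).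
    assert (Hdm : (e * r * q0 = Q * s + jz)%Z) by (apply Z.div_mod; lia).
    set (w := (e * r * p0 - s * P)%Z).
    assert (Hee : (e * e = 1)%Z) by (destruct Hdet as [h|h]; rewrite h; reflexivity).
    assert (HjP : (jz * P = r + Q * w)%Z).
    { assert (jz = e * r * q0 - Q * s)%Z by lia. rewrite H. unfold w.
      replace ((e * r * q0 - Q * s) * P)%Z with (e * r * (P * q0 - p0 * Q) + Q * (e * r * p0 - s * P))%Z by ring.
      fold e. replace (e * r * e)%Z with (r * (e * e))%Z by ring. rewrite Hee. ring. }
    exists (Z.to_nat jz). rewrite INR_IZR_INZ, Z2Nat.id by lia.
    assert (HQpos : 0 < IZR Q) by (apply IZR_lt; lia).
    assert (HKQ : IZR Q <= (INR K + 1) * IZR q0).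
    { rewrite INR_IZR_INZ. replace 1 with (IZR 1) by reflexivity. rewrite <- plus_IZR, <- mult_IZR. apply IZR_le. lia. }
    assert (Hq0d : IZR q0 * delta < 4).
    { apply (Rmult_lt_compat_r delta) in Hi; [|lra]. unfold Rdiv in Hi.
      rewrite Rmult_assoc, Rinv_l in Hi by lra. lra. }
    assert (HQd : 4 <= IZR Q * delta).
    { apply (Rmult_le_compat_r delta) in Hk1; [|lra]. unfold Rdiv in Hk1.
      rewrite Rmult_assoc, Rinv_l in Hk1 by lra. lra. }
    assert (Hjq : IZR jz < IZR Q) by (apply IZR_lt; lia).
    assert (Hj0 : 0 <= IZR jz) by (apply IZR_le; lia).
    split.
    { assert (IZR jz * delta <= IZR Q * delta) by (apply Rmult_le_compat_r; lra). nra. }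
    exists (- w)%Z.
    set (D := IZR Q * alpha - IZR P) in *.
    assert (HQQ' : IZR Q <= IZR Q') by (apply IZR_le; lia).
    assert (HjD : Rabs (IZR jz * D) <= 1).
    { rewrite Rabs_mult, (Rabs_pos_eq (IZR jz)) by lra. pose proof (Rabs_pos D). nra. }
    assert (HQX : IZR Q * (th + IZR jz * alpha + IZR (- w)) = IZR Q * th + IZR r + IZR jz * D).
    { unfold D. rewrite opp_IZR.
      replace (IZR Q * (th + IZR jz * alpha + - IZR w)) with (IZR Q * th + IZR jz * (IZR Q * alpha) - IZR Q * IZR w) by ring.
      replace (IZR jz * (IZR Q * alpha - IZR P)) with (IZR jz * (IZR Q * alpha) - IZR jz * IZR P) by ring.
      rewrite <- (mult_IZR jz P), HjP, plus_IZR, mult_IZR. ring. }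
    destruct (base_Int_part (IZR Q * t)) as [b1 b2]. fold r in b1, b2.
    apply Rabs_le_between in HjD.
    set (X := th + IZR jz * alpha + IZR (- w)) in *.
    unfold t in *.
    split.
    + apply (Rmult_le_reg_l (IZR Q)); [lra|]. nra.
    + apply (Rmult_lt_reg_l (IZR Q)); [lra|]. nra.
Qed.


Lemma Int_part_shift (m : Z) (y : R) : 0 <= y < 1 -> Int_part (IZR m + y) = m.
Proof.
  intros Hy. unfold Int_part.
  rewrite <- (tech_up (IZR m + y) (m + 1)); [lia| rewrite plus_IZR; simpl; lra | rewrite plus_IZR; simpl; lra].
Qed.

Lemma frac_shift (m : Z) (y : R) : 0 <= y < 1 -> fracR (IZR m + y) = y.
Proof. intros Hy. unfold fracR. rewrite Int_part_shift by exact Hy. ring. Qed.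

Lemma frac_range x : 0 <= fracR x < 1.
Proof. unfold fracR. destruct (base_Int_part x). lra. Qed.

Lemma frac_decomp x : x = IZR (Int_part x) + fracR x.
Proof. unfold fracR. ring. Qed.

Lemma frac_int x (z : Z) : fracR (x + IZR z) = fracR x.
Proof.
  rewrite (frac_decomp x) at 1.
  replace (IZR (Int_part x) + fracR x + IZR z) with (IZR (Int_part x + z) + fracR x) by (rewrite plus_IZR; ring).
  apply frac_shift, frac_range.
Qed.

Lemma v_seq_int alpha th (z : Z) j : v_seq alpha (th + IZR z) j = v_seq alpha th j.
Proof.
  unfold v_seq. replace (INR j * alpha + (th + IZR z)) with ((INR j * alpha + th) + IZR z) by ring.
  rewrite frac_int. reflexivity.
Qed.

Lemma frac_next x alpha : 0 < alpha < 1 ->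
  (fracR x + alpha < 1 -> fracR (x + alpha) = fracR x + alpha) /\
  (1 <= fracR x + alpha -> fracR (x + alpha) = fracR x + alpha - 1).
Proof.
  intros Ha. pose proof (frac_range x). split; intros H1.
  - rewrite (frac_decomp x) at 1. rewrite Rplus_assoc. apply frac_shift. lra.
  - rewrite (frac_decomp x) at 1.
    replace (IZR (Int_part x) + fracR x + alpha) with (IZR (Int_part x + 1) + (fracR x + alpha - 1))
      by (rewrite plus_IZR; simpl; ring).
    apply frac_shift. lra.
Qed.

Lemma word_stable alpha th n t : 0 < alpha < 1 ->
  (forall j, (1 <= j <= n + 1)%nat ->
     - fracR (INR j * alpha + th) <= t < 1 - fracR (INR j * alpha + th)) ->
  forall j, (1 <= j <= n)%nat -> v_seq alpha (th + t) j = v_seq alpha th j.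
Proof.
  intros Ha H j Hj.
  set (y := fracR (INR j * alpha + th)).
  assert (Hy := frac_range (INR j * alpha + th)). fold y in Hy.
  pose proof (H j ltac:(lia)) as Hj1. fold y in Hj1.
  pose proof (H (S j) ltac:(lia)) as Hj2.
  replace (INR (S j) * alpha + th) with ((INR j * alpha + th) + alpha) in Hj2 by (rewrite S_INR; ring).
  destruct (frac_next (INR j * alpha + th) alpha Ha) as [Hn1 Hn2]. fold y in Hn1, Hn2.
  assert (Hft : fracR (INR j * alpha + (th + t)) = y + t).
  { replace (INR j * alpha + (th + t)) with (IZR (Int_part (INR j * alpha + th)) + (y + t))
      by (unfold y, fracR; ring).
    apply frac_shift. lra. }
  unfold v_seq. rewrite Hft. fold y.
  destruct (Rle_dec (1 - alpha) y) as [h|h].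
  - rewrite Hn2 in Hj2 by lra.
    destruct (Rle_dec (1 - alpha) (y + t)); [|lra].
    destruct (Rlt_dec (y + t) 1); [|lra]. destruct (Rlt_dec y 1); lra.
  - rewrite Hn1 in Hj2 by lra.
    destruct (Rle_dec (1 - alpha) (y + t)); [lra|]. reflexivity.
Qed.

Lemma extremes (y : nat -> R) m : exists j1 j2, (1 <= j1 <= m + 1)%nat /\ (1 <= j2 <= m + 1)%nat /\
  forall j, (1 <= j <= m + 1)%nat -> y j1 <= y j /\ y j <= y j2.
Proof.
  induction m as [|m [j1 [j2 [H1 [H2 H3]]]]].
  - exists 1%nat, 1%nat. split; [lia|split; [lia|]]. intros j Hj. replace j with 1%nat by lia. lra.
  - destruct (Rle_lt_dec (y j1) (y (m + 2)%nat)) as [a1|a1];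
    destruct (Rle_lt_dec (y (m + 2)%nat) (y j2)) as [a2|a2].
    + exists j1, j2. split; [lia|split; [lia|]]. intros j Hj.
      destruct (Nat.eq_dec j (m + 2)) as [->|hne]; [lra|]. apply H3. lia.
    + exists j1, (m + 2)%nat. split; [lia|split; [lia|]]. intros j Hj.
      destruct (Nat.eq_dec j (m + 2)) as [->|hne]; [lra|]. pose proof (H3 j ltac:(lia)). lra.
    + exists (m + 2)%nat, j2. split; [lia|split; [lia|]]. intros j Hj.
      destruct (Nat.eq_dec j (m + 2)) as [->|hne]; [lra|]. pose proof (H3 j ltac:(lia)). lra.
    + exfalso. pose proof (H3 j1 ltac:(lia)). lra.
Qed.

Lemma LR alpha a K (Ha : forall k, (1 <= a k <= K)%nat) (Hx : forall k, 0 < alph alpha a k < 1)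
  (Hal : 0 < alpha < 1) :
  forall th th' n, (1 <= n)%nat -> exists k, (k <= (4 * (K + 1) * (K + 1) * (K + 2)) * n)%nat /\
    forall j, (1 <= j <= n)%nat -> v_seq alpha (th' + INR k * alpha) j = v_seq alpha th j.
Proof.
  intros th th' n Hn.
  set (y := fun j => fracR (INR j * alpha + th)).
  destruct (extremes y n) as [j1 [j2 [Hj1 [Hj2 Hext]]]].
  assert (HK0 : 0 <= INR K) by apply pos_INR.
  assert (Hn1 : 1 <= INR n) by (apply (le_INR 1); exact Hn).
  set (Cn := (INR K + 1) * (INR K + 2) * INR n).
  assert (HCn : 1 <= Cn) by (unfold Cn; nra).
  set (dlt := / Cn).
  assert (Hdlt : 0 < dlt) by (unfold dlt; apply Rinv_0_lt_compat; lra).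
  assert (Hdlt1 : dlt <= 1) by (unfold dlt; rewrite <- Rinv_1; apply Rinv_le_contravar; lra).
  pose proof (frac_range (INR j1 * alpha + th)) as Hy1.
  pose proof (frac_range (INR j2 * alpha + th)) as Hy2.
  assert (Hlen : dlt <= y j1 + (1 - y j2)).
  { destruct (Nat.eq_dec j1 j2) as [<-|hne]; [lra|].
    set (d := (Z.of_nat j1 - Z.of_nat j2)%Z).
    set (z := (Int_part (INR j1 * alpha + th) - Int_part (INR j2 * alpha + th) - 1)%Z).
    assert (Heq : y j1 + (1 - y j2) = IZR d * alpha - IZR z).
    { unfold y, d, z, fracR. rewrite !minus_IZR, <- !INR_IZR_INZ. simpl. ring. }
    assert (Hd : (1 <= Z.abs d <= Z.of_nat n)%Z) by (unfold d; lia).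
    pose proof (gap alpha a K Ha Hx n d z Hn Hd) as Hg.
    fold Cn in Hg. rewrite <- Heq in Hg.
    rewrite Rabs_pos_eq in Hg by (unfold y; lra).
    unfold dlt. apply (Rmult_le_reg_r Cn); [lra|]. rewrite Rinv_l by lra. lra. }
  destruct (dense alpha a K Ha Hx dlt th' (th - y j1) Hdlt) as [k [Hkb [z Hz]]].
  exists k. split.
  - apply INR_le. rewrite mult_INR, !mult_INR, !plus_INR. simpl.
    assert (INR k <= 4 * (INR K + 1) * Cn).
    { assert (HC1 : Cn * dlt = 1) by (unfold dlt; apply Rinv_r; lra).
      apply (Rmult_le_reg_r dlt); [lra|]. rewrite Rmult_assoc, HC1. lra. }
    unfold Cn in H. replace (INR 4) with 4 by (simpl; ring). 
    replace (INR 2) with 2 by (simpl; ring). nra.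
  - intros j Hj.
    set (t := th' + INR k * alpha + IZR z - th).
    rewrite <- (v_seq_int alpha (th' + INR k * alpha) z j).
    replace (th' + INR k * alpha + IZR z) with (th + t) by (unfold t; ring).
    apply (word_stable alpha th n t Hal); [|exact Hj].
    intros j' Hj'. pose proof (Hext j' Hj'). unfold y in *. unfold t. lra.
Qed.


Theorem theorem2 (alpha : R) (a : nat -> nat)
  (Halpha : 0 < alpha < 1) (Hirr : irrational alpha)
  (Hcf : is_cf_expansion alpha a)
  (Hbdd : exists K : nat, forall k, (a k <= K)%nat) :
  forall (lambda : R) (E : C), lambda <> 0 ->
  exists gamma : R, forall theta : R, 0 <= theta < 1 ->
    is_lim_seq (fun n => ln (opnorm (Mn lambda E alpha theta n)) / INR n) gamma.
Proof.
  intros lambda E _.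
  destruct Hbdd as [K HK].
  assert (Ha : forall k, (1 <= a k <= K)%nat).
  { intros k. destruct Hcf as [Hpos _]. pose proof (Hpos k). pose proof (HK k). lia. }
  assert (Hx : forall k, 0 < alph alpha a k < 1).
  { intros k. apply (alph_props alpha a Halpha Hirr Hcf k). }
  destruct (uniform_subadd (fL lambda E alpha) alpha (ln (cT lambda E))
             (4 * (K + 1) * (K + 1) * (K + 2))) as [g Hg].
  - intros th n. apply fL_bounds.
  - intros th n m. apply fL_subadd.
  - intros th th' n Hn.
    destruct (LR alpha a K Ha Hx Halpha th th' n Hn) as [k [Hk Hw]].
    exists k. split; [exact Hk|]. unfold fL. rewrite (Mn_ext lambda E alpha _ _ n Hw). reflexivity.
  - exists g. intros theta _. apply Hg.
Qed.
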